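(* Consider a sequence of screening problems indexed by the number of alternatives $k$, with fixed $m$ and $\delta>0$, alternatives labeled so that $\mu_1\ge\dots\ge\mu_k$, and $\mathcal{G}=\{i:\mu_i\ge\mu_m-\delta\}$. Suppose $\limsup_{k\to\infty}|\mathcal{G}|<\infty$. Let a budget allocation algorithm satisfy the two randomization properties below. If the total evaluation budget $B$ satisfies $\lim_{k\to\infty}B/k=0$, then $\limsup_{k\to\infty}\mathrm{PGS}_m=0$.
   Context: A budget allocation algorithm allocates a total of $B$ observations to the $k$ alternatives one at a time (each observation of alternative $i$ is a noisy evaluation with mean $\mu_i$), and when the budget is exhausted outputs a subset $\mathcal{S}$ of $m$ alternatives; $\mathrm{PGS}_m=\Pr\{\mathcal{S}\subseteq\mathcal{G}\}$. Property 1: letting $\mathcal{A}_t$ be the set of alternatives with no observations when the $t$-th observation is allocated, if the algorithm allocates the $t$-th observation to an alternative in $\mathcal{A}_t$, then every alternative in $\mathcal{A}_t$ is selected with equal probability. Property 2: letting $\mathcal{A}$ be the set of alternatives with no observations when the budget is exhausted, if $|\mathcal{A}|\ge m$ and the algorithm chooses its $m$ output alternatives from $\mathcal{A}$, then every $m$-element subset of $\mathcal{A}$ is selected with equal probability. *)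

(* Defs.v *)
From HB Require Import structures.
From mathcomp Require Import all_boot all_order all_algebra.
From mathcomp Require Import all_classical all_reals all_analysis.
Set Implicit Arguments. Unset Strict Implicit. Unset Printing Implicit Defensive.
Import Order.TTheory GRing.Theory Num.Theory.
Local Open Scope ring_scope.

(* Good set G = {i : mu_i >= mu_m - delta}, where alternatives are 0-indexed,
   so mu_m (1-based) is mu at index m-1. (Empty when k < m.) *)
Definition goodset (R : realType) (k : nat) (mu : 'I_k -> R) (m : nat) (delta : R)
  : {set 'I_k} :=
  [set i : 'I_k | [exists j : 'I_k, (nat_of_ord j == m.-1) && (mu j - delta <= mu i)]].

(* Set of alternatives with no observations when the (t+1)-th observation
   (0-based index t) is allocated: those not chosen by X 0, ..., X (t-1). *)
Definition unobserved (T : Type) (k : nat) (X : nat -> T -> 'I_k) (t : nat) (w : T)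
  : {set 'I_k} :=
  [set i : 'I_k | [forall s : 'I_t, X s w != i]].

(* Main.v *)
Require Import Defs.
From HB Require Import structures.
From mathcomp Require Import all_boot all_order all_algebra.
From mathcomp Require Import all_classical all_reals all_analysis.
From mathcomp Require Import measurable_realfun.
From mathcomp Require Import lra.
Import Order.TTheory GRing.Theory Num.Theory.
Local Open Scope classical_set_scope.
Local Open Scope ring_scope.

Lemma cnt_indic (R : realType) (T : Type) (J : finType) (A : J -> set T) x :
  (\sum_(j : J) (\1_(A j) x : R)) = #|[set j | `[< A j x >]]%SET|%:R.
Proof.
rewrite -sum1_card natr_sum [RHS]big_mkcond /=; apply: eq_bigr => j _.
rewrite indicE inE; case: asboolP => //= H.   by rewrite mem_set. by rewrite memNset.
Qed.

Local Open Scope ereal_scope.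
Lemma sumP_integral d (T : measurableType d) (R : realType) (P : probability T R)
  (J : finType) (A : J -> set T) (mA : forall j, measurable (A j)) :
  \sum_(j : J) P (A j) = \int[P]_(x in setT) (#|[set j | `[< A j x >]]%SET|%:R)%:E.
Proof.
transitivity (\sum_(j : J) \int[P]_(x in setT) (\1_(A j) x)%:E).
  by apply: eq_bigr => j _; rewrite integral_indic // setIT.
rewrite -ge0_integral_sum //.
- by apply: eq_integral => x _; rewrite sumEFin cnt_indic.
- by move=> j; apply/measurable_EFinP; exact: measurable_indic.
Qed.

Lemma cnt_meas d (T : measurableType d) (R : realType)
  (J : finType) (A : J -> set T) (mA : forall j, measurable (A j)) :
  measurable_fun setT (fun x => (#|[set j | `[< A j x >]]%SET|%:R : R)%:E).
Proof.
rewrite (_ : (fun x => _) = (fun x => (\sum_j \1_(A j) x)%:E)); last first.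
  by apply/funext => x; rewrite cnt_indic.
apply/measurable_EFinP; apply: measurable_sum => j; exact: measurable_indic.
Qed.

Lemma count_lb d (T : measurableType d) (R : realType) (P : probability T R)
  (J : finType) (A : J -> set T) (mA : forall j, measurable (A j))
  (C : set T) (mC : measurable C) (c : nat) :
  (forall w, C w -> (c <= #|[set j | `[< A j w >]]%SET|)%N) ->
  c%:R%:E * P C <= \sum_(j : J) P (A j).
Proof.
move=> Hc; rewrite sumP_integral // -[C in P C]setIT -integral_indic //.
rewrite -(@integralZl_indic _ _ _ _ _ measurableT (fun _ => C)) //.
apply: ge0_le_integral => //.
- apply/measurable_EFinP; apply: measurable_funM => //; exact: measurable_indic.
- exact: cnt_meas.
- move=> x _; rewrite lee_fin indicE; have [Cx|nCx] := boolP (x \in C).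
  by rewrite mulr1 ler_nat; apply: Hc; rewrite -inE.
by rewrite mulr0.
- by rewrite ltrn0.
Qed.

Lemma count_ub d (T : measurableType d) (R : realType) (P : probability T R)
  (J : finType) (A : J -> set T) (mA : forall j, measurable (A j)) :
  (forall w, (#|[set j | `[< A j w >]]%SET| <= 1)%N) ->
  \sum_(j : J) P (A j) <= 1.
Proof.
move=> Hc; rewrite sumP_integral //.
apply: (@le_trans _ _ (\int[P]_(x in setT) (cst 1) x)).
  apply: ge0_le_integral => //; first exact: cnt_meas.
  move=> x _; rewrite lee_fin (ler_nat _ _ 1); exact: Hc.
rewrite integral_cst // mul1e. exact: probability_le1.
Qed.

Local Close Scope ereal_scope.
Lemma meas_forall d (T : measurableType d) (I : finType) (F : I -> set T) :
  (forall i, measurable (F i)) -> measurable [set w | forall i, F i w].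
Proof.
move=> mF; rewrite (_ : [set w | _] = \bigcap_(i in [set: I]) F i).
  by apply: fin_bigcap_measurable => //; exact: finite_finset.
by apply/seteqP; split => w /= H i //; apply: H.
Qed.

Lemma mU1 d (T : measurableType d) k (X : nat -> T -> 'I_k)
  (mX : forall t i, measurable [set w | X t w = i]) i t :
  measurable [set w | i \in unobserved X t w].
Proof.
rewrite (_ : [set w | _] = [set w | forall s : 'I_t, (~` [set w | X s w = i]) w]).
  by apply: meas_forall => s; apply: measurableC.
apply/seteqP; split => w /=; rewrite inE.
  by move/forallP => H s /eqP; rewrite (negbTE (H s)).
by move=> H; apply/forallP => s; apply/eqP; exact: H.
Qed.

Lemma mUS d (T : measurableType d) k (X : nat -> T -> 'I_k)
  (mX : forall t i, measurable [set w | X t w = i]) (A : {set 'I_k}) t :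
  measurable [set w | A \subset unobserved X t w].
Proof.
rewrite (_ : [set w | _] = [set w | forall i : 'I_k, [set w | i \in A -> i \in unobserved X t w] w]).
  apply: meas_forall => i; case: (boolP (i \in A)) => iA.
    rewrite (_ : [set w | _] = [set w | i \in unobserved X t w]); first exact: mU1.
    by apply/seteqP; split => w /=; [move=> H; exact: H|move=> H _].
  rewrite (_ : [set w | _] = setT); first exact: measurableT.
  by apply/seteqP; split => w //= _; rewrite (negbTE iA).
apply/seteqP; split => w /=.
  by move/fintype.subsetP => H i /H.
by move=> H; apply/fintype.subsetP => i /H.
Qed.

Lemma card_unobs {k T} (X : nat -> T -> 'I_k) t w : (k - t <= #|unobserved X t w|)%N.
Proof.
rewrite (_ : unobserved X t w = ~: [set X s w | s : 'I_t]).
  rewrite cardsCs finset.setCK card_ord leq_sub2l //.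
  by rewrite (leq_trans (leq_imset_card _ _)) // card_ord.
apply/setP => i; rewrite !inE; apply/forallP/idP.
  move=> H; apply/imsetP => -[s _ Hs]; by move: (H s); rewrite Hs eqxx.
by move=> /negP H s; apply/eqP => Hs; apply: H; apply/imsetP; exists s.
Qed.

Lemma mSsub d (T : measurableType d) k (S : T -> {set 'I_k})
  (mS : forall A, measurable [set w | S w = A]) (G : {set 'I_k}) :
  measurable [set w | S w \subset G].
Proof.
  rewrite (_ : [set w | _] = \bigcup_(A0 in [set A0 : {set 'I_k} | A0 \subset G]) [set w | S w = A0]).
    by apply: fin_bigcup_measurable => //; exact: finite_finset.
  apply/seteqP; split => w /=.
    by move=> H; exists (S w).
  by case=> A0 /= H ->.
Qed.

Local Open Scope ereal_scope.

Lemma part1 d (T : measurableType d) (R : realType) (P : probability T R) k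
  (X : nat -> T -> 'I_k) (mX : forall t i, measurable [set w | X t w = i]) t
  (h1 : forall i j : 'I_k,
     P [set w | i \in unobserved X t w /\ j \in unobserved X t w /\ X t w = i]
   = P [set w | i \in unobserved X t w /\ j \in unobserved X t w /\ X t w = j]) i :
  ((k - t)%:R)%:E * P [set w | i \in unobserved X t w /\ X t w = i] <= 1.
Proof.
apply: le_trans (@count_lb _ _ _ P _
   (fun j => [set w | i \in unobserved X t w /\ j \in unobserved X t w /\ X t w = i]) _ _ _ (k - t)%N _) _.
- move=> j; apply: measurableI; first exact: mU1.
  by apply: measurableI; [exact: mU1|exact: mX].
- by apply: measurableI; [exact: mU1|exact: mX].
- move=> w [iU Xi]; apply: leq_trans (card_unobs X t w) _.
  apply: subset_leq_card; apply/fintype.subsetP => j jU; rewrite inE.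
  by apply/asboolP.
rewrite (eq_bigr _ (fun j _ => h1 i j)); apply: count_ub.
- move=> j; apply: measurableI; first exact: mU1.
  by apply: measurableI; [exact: mU1|exact: mX].
move=> w; rewrite -(cards1 (X t w)); apply: subset_leq_card.
by apply/fintype.subsetP => j; rewrite !inE => -[_ [_ ->]].
Qed.

Lemma part2 d (T : measurableType d) (R : realType) (P : probability T R) k
  (X : nat -> T -> 'I_k) (mX : forall t i, measurable [set w | X t w = i])
  (S : T -> {set 'I_k}) (mS : forall A, measurable [set w | S w = A])
  (m Bk : nat) (m0 : (0 < m)%N) (cardS : forall w, #|S w| = m)
  (h2 : forall S1 S2 : {set 'I_k}, #|S1| = m -> #|S2| = m ->
      P [set w | S1 \subset unobserved X Bk w /\ S2 \subset unobserved X Bk w /\ S w = S1]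
    = P [set w | S1 \subset unobserved X Bk w /\ S2 \subset unobserved X Bk w /\ S w = S2])
  (S1 : {set 'I_k}) :
  ((k - Bk - m)%:R)%:E * P [set w | S1 \subset unobserved X Bk w /\ S w = S1] <= 1.
Proof.
have [cS1|cS1] := eqVneq #|S1| m; last first.
  rewrite (_ : [set w | _] = set0) ?measure0 ?mule0 //.
  apply/seteqP; split => w //= [_ SwS1]; move: cS1; by rewrite -SwS1 cardS eqxx.
have : (0 < #|S1|)%N by rewrite cS1.
case/card_gt0P => a aS1.
pose S2 b := b |: (S1 :\ a).
have cS2 b : b \notin S1 -> #|S2 b| = m.
  move=> bS1; rewrite cardsU1 (cardsD1 a S1) aS1 in cS1 *.
  have -> : b \notin S1 :\ a by rewrite !inE negb_and bS1 orbT.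
  by rewrite -cS1.
pose L b := if b \in S1 then set0 else
  [set w | S1 \subset unobserved X Bk w /\ S2 b \subset unobserved X Bk w /\ S w = S1].
pose Rb b := if b \in S1 then set0 else
  [set w | S1 \subset unobserved X Bk w /\ S2 b \subset unobserved X Bk w /\ S w = S2 b].
have mL b : measurable (L b).
  rewrite /L; case: (b \in S1) => //.
  apply: measurableI; first exact: mUS.
  by apply: measurableI; [exact: mUS|exact: mS].
have mR b : measurable (Rb b).
  rewrite /Rb; case: (b \in S1) => //.
  apply: measurableI; first exact: mUS.
  by apply: measurableI; [exact: mUS|exact: mS].
apply: le_trans (@count_lb _ _ _ P _ L mL _ _ (k - Bk - m)%N _) _.
- by apply: measurableI; [exact: mUS|exact: mS].
- move=> w [S1U SwS1].
  apply: (@leq_trans (#|unobserved X Bk w| - #|S1|)).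
    by rewrite cS1 leq_sub2r // card_unobs.
  apply: (@leq_trans #|unobserved X Bk w :\: S1|).
    by rewrite cardsD leq_sub2l // subset_leq_card // subsetIr.
  apply: subset_leq_card; apply/fintype.subsetP => b; rewrite finset.in_setD => /andP [bS1 bU].
  rewrite inE; apply/asboolP; rewrite /L (negbTE bS1); split => //; split => //.
  rewrite /S2 finset.subUset finset.sub1set bU /=.
  by apply: (fintype.subset_trans _ S1U); exact: finset.subsetDl.
rewrite (@eq_bigr _ _ _ _ _ _ _ (fun b => P (Rb b))); last first.
  move=> b _; rewrite /L /Rb; case: ifP => // /negbT bS1.
  by apply: h2 => //; exact: cS2.
apply: count_ub => // w; apply/card_le1_eqP => b b'; rewrite !inE.
rewrite /Rb; case: ifP => [_ []|/negbT bS1 [_ [_ Sb]]].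
case: ifP => [_ []|/negbT b'S1 [_ [_ Sb']]].
have : b' \in S2 b by rewrite -Sb Sb' /S2 finset.setU11.
rewrite /S2 !inE => /orP [/eqP //|/andP [_ H]].
by rewrite H in b'S1.
Qed.

Lemma bound_k d (T : measurableType d) (R : realType) (P : probability T R) k
  (X : nat -> T -> 'I_k) (mX : forall t i, measurable [set w | X t w = i])
  (S : T -> {set 'I_k}) (mS : forall A, measurable [set w | S w = A])
  (m Bk : nat) (m0 : (0 < m)%N) (cardS : forall w, #|S w| = m)
  (h1 : forall t, (t < Bk)%N -> forall i j : 'I_k,
     P [set w | i \in unobserved X t w /\ j \in unobserved X t w /\ X t w = i]
   = P [set w | i \in unobserved X t w /\ j \in unobserved X t w /\ X t w = j])
  (h2 : forall S1 S2 : {set 'I_k}, #|S1| = m -> #|S2| = m ->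
      P [set w | S1 \subset unobserved X Bk w /\ S2 \subset unobserved X Bk w /\ S w = S1]
    = P [set w | S1 \subset unobserved X Bk w /\ S2 \subset unobserved X Bk w /\ S w = S2])
  (G : {set 'I_k}) (g : nat) (HG : (#|G| <= g)%N) :
  ((k - Bk - m)%:R)%:E * P [set w | S w \subset G] <= ((g * Bk + 2 ^ g)%:R)%:E.
Proof.
pose A (j : ('I_k * 'I_Bk) + {set 'I_k}) : set T :=
  match j with
  | inl p => if p.1 \in G then [set w | p.1 \in unobserved X p.2 w /\ X p.2 w = p.1] else set0
  | inr S1 => if S1 \subset G then [set w | S1 \subset unobserved X Bk w /\ S w = S1] else set0
  end.
pose W (j : ('I_k * 'I_Bk) + {set 'I_k}) : \bar R :=
  match j with
  | inl p => ((p.1 \in G : nat)%:R)%:E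
  | inr S1 => ((S1 \subset G : nat)%:R)%:E
  end.
have mA j : measurable (A j).
  case: j => [[i t]|S1] /=; case: ifP => // _.
    by apply: measurableI; [exact: mU1|exact: mX].
  by apply: measurableI; [exact: mUS|exact: mS].
have mC : measurable [set w | S w \subset G] by exact: (@mSsub _ _ _ S mS G).
have D0 : (0 <= ((k - Bk - m)%:R)%:E :> \bar R) by rewrite lee_fin.
apply: (@le_trans _ _ (((k - Bk - m)%:R)%:E * \sum_j P (A j))).
  apply: lee_wpmul2l => //.
  rewrite -[X in X <= _]mul1e.
  apply: (@count_lb _ _ _ P _ A mA _ mC 1%N).
  move=> w SG; apply/card_gt0P.
  have [SU|/subsetPn [i iS iU]] := boolP (S w \subset unobserved X Bk w).
    by exists (inr (S w)); rewrite inE; apply/asboolP => /=; rewrite SG.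
  have iG : i \in G by exact: (fintype.subsetP SG).
  move: iU; rewrite inE negb_forall => /existsP [s0]; rewrite negbK => Hs0.
  have ex : exists n, (n < Bk)%N && (X n w == i) by exists s0; rewrite ltn_ord Hs0.
  case: (ex_minnP ex) => n /andP [nB Xn] nmin.
  exists (inl (i, Ordinal nB)); rewrite inE; apply/asboolP => /=; rewrite iG.
  split; last exact/eqP.
  rewrite inE; apply/forallP => s; apply/negP => Hs.
  have := nmin s; rewrite (ltn_trans (ltn_ord s) nB) Hs => /(_ isT).
  by rewrite leqNgt ltn_ord.
apply: (@le_trans _ _ (\sum_j W j)).
  rewrite ge0_sume_distrr //; apply: lee_sum => j _.
  case: j => [[i t]|S1] /=; case: ifP => iG /=; try by rewrite measure0 mule0.
    apply: le_trans (@part1 _ _ _ P _ X mX t (h1 t (ltn_ord t)) i).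
    apply: lee_wpmul2r => //; rewrite lee_fin ler_nat.
    apply: leq_trans (leq_subr _ _) _; apply: leq_sub2l; exact: ltnW.
  exact: (@part2 _ _ _ P _ X mX S mS m Bk m0 cardS h2 S1).
rewrite big_sumType /= !sumEFin -!natr_sum -EFinD lee_fin -natrD ler_nat.
have e1 : (\sum_(p : 'I_k * 'I_Bk) (p.1 \in G : nat))%N = (#|G| * Bk)%N.
  rewrite (_ : (\sum_(p : 'I_k * 'I_Bk) (p.1 \in G : nat))%N = #|[set p : 'I_k * 'I_Bk | p.1 \in G]%SET|).
    rewrite (_ : [set p : 'I_k * 'I_Bk | p.1 \in G]%SET = finset.setX G [set: 'I_Bk]%SET).
      by rewrite cardsX cardsT card_ord.
    by apply/setP => p; rewrite !inE andbT.
  by rewrite -sum1dep_card [RHS]big_mkcond; apply: eq_bigr => p _; case: (p.1 \in G).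
have e2 : (\sum_(S1 : {set 'I_k}) (S1 \subset G : nat))%N = (2 ^ #|G|)%N.
  rewrite -card_powerset (_ : powerset G = [set S1 : {set 'I_k} | S1 \subset G]%SET); last first.
    by apply/setP => S1; rewrite !inE.
  rewrite -sum1dep_card [RHS]big_mkcond.
  by apply: eq_bigr => p _; case: (p \subset G).
rewrite e1 e2 leq_add //; first by rewrite leq_mul2r HG orbT.
by rewrite leq_pexp2l.
Qed.

Local Close Scope ereal_scope.
Lemma real_fin (R : realFieldType) (kr b mr G' c q eps eta : R) : 0 < kr -> 0 <= q ->
  0 <= G' -> 0 <= b -> 0 <= eta -> b < eta * kr -> eta <= 1/4 -> eta * (4 * (G'+1)) <= eps ->
  4 * mr <= kr -> 4 * c <= eps * kr -> (kr - b - mr) * q <= G' * b + c -> q <= eps.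
Proof.
move=> k0 q0 G0 b0 e0 hb he heps hm hc H.
have hb' : eta * kr <= 1/4 * kr by apply: ler_wpM2r => //; exact: ltW.
have h1 : kr / 2 * q <= (kr - b - mr) * q.
  apply: ler_wpM2r => //; lra.
have h2 : G' * b <= G' * (eta * kr) by apply: ler_wpM2l => //; lra.
have h3 : G' * (eta * kr) <= eps * kr / 4.
  have : (G' + 1) * eta * kr * 4 <= eps * kr by nra.
  nra.
have h4 : kr * q <= kr * eps by lra.
by rewrite -(ler_pM2l k0).
Qed.

Theorem mainTheorem6
  (R : realType) (m : nat) (delta : R)
  (d : nat -> measure_display) (T : forall k, measurableType (d k))
  (P : forall k, probability (T k) R)
  (mu : forall k, 'I_k -> R)
  (B : nat -> nat)
  (X : forall k, nat -> T k -> 'I_k)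
  (S : forall k, T k -> {set 'I_k})
  (F : forall k, nat -> set_system (T k)) :
  (0 < m)%N ->
  0 < delta ->
  (* alternatives labeled so that mu_1 >= ... >= mu_k *)
  (forall k (i j : 'I_k), (i <= j)%N -> mu k j <= mu k i) ->
  (* limsup_k |G_k| < oo *)
  (limn_esup (fun k => ((#|goodset (mu k) m delta|)%:R : R)%:E) < +oo)%E ->
  (* B_k / k -> 0 *)
  ((fun k : nat => (B k)%:R / k%:R : R) @ \oo --> 0%R) ->
  (* measurability of the allocations and of the output *)
  (forall k t (i : 'I_k), measurable [set w | X k t w = i]) ->
  (forall k (A : {set 'I_k}), measurable [set w | S k w = A]) ->
  (* the output is a subset of m alternatives *)
  (forall k w, (m <= k)%N -> #|S k w| = m) ->
  (* F k t : the history (information) available when the (t+1)-th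
     observation is allocated; F k (B k) : history when budget is exhausted *)
  (forall k t, sigma_algebra setT (F k t)) ->
  (forall k t, F k t `<=` measurable) ->
  (forall k t u, (t <= u)%N -> F k t `<=` F k u) ->
  (forall k s t (i : 'I_k), (s < t)%N -> F k t [set w | X k s w = i]) ->
  (* Property 1 *)
  (forall k t, (m <= k)%N -> (t < B k)%N ->
     forall H, F k t H -> forall i j : 'I_k,
       P k (H `&` [set w | i \in unobserved (X k) t w /\ j \in unobserved (X k) t w
                           /\ X k t w = i])
     = P k (H `&` [set w | i \in unobserved (X k) t w /\ j \in unobserved (X k) t w
                           /\ X k t w = j])) ->
  (* Property 2 *)
  (forall k, (m <= k)%N ->
     forall H, F k (B k) H -> forall S1 S2 : {set 'I_k},
       #|S1| = m -> #|S2| = m ->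
       P k (H `&` [set w | S1 \subset unobserved (X k) (B k) w
                           /\ S2 \subset unobserved (X k) (B k) w /\ S k w = S1])
     = P k (H `&` [set w | S1 \subset unobserved (X k) (B k) w
                           /\ S2 \subset unobserved (X k) (B k) w /\ S k w = S2])) ->
  (* limsup_k PGS_m = 0 *)
  limn_esup (fun k => P k [set w | S k w \subset goodset (mu k) m delta]) = 0%E.

Proof.
move=> m0 dpos mu_dec hG hB mX mS cardS sig Fmeas Fmono FX prop1 prop2.
have [g [N1 HN1]] : exists g : nat, exists N1, forall k, (N1 <= k)%N ->
    (#|goodset (mu k) m delta| <= g)%N.
  move: hG => /ereal_inf_lt [y [V Vinf <-]] Hy.
  case: Vinf => N _ HV.
  set u := (fun k => ((#|goodset (mu k) m delta|)%:R : R)%:E) in Hy *.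
  have uy n : (N <= n)%N -> (u n <= ereal_sup (u @` V))%E.
    by move=> Nn; apply: ereal_sup_ubound; exists n => //; apply: HV.
  move: Hy uy; case: (ereal_sup (u @` V)) => [r| |] Hy uy.
  - exists (Num.bound r), N => k Nk; have := uy k Nk; rewrite /u lee_fin => h.
    have h0 : (0 <= r)%R by apply: le_trans h.
    apply: ltnW; rewrite -(ltr_nat R); apply: le_lt_trans h _.
    exact: archi_boundP.
  - by rewrite ltxx in Hy.
  - by have := uy N (leqnn N).
apply/eqP; rewrite eq_le; apply/andP; split; last first.
  apply: limf_esup_ge0 => //.
apply/lee_addgt0Pr => eps eps0; rewrite add0e.
suff [V Vinf HV] : exists2 V, \oo V & forall k, V k ->
    (P k [set w | S k w \subset goodset (mu k) m delta] <= eps%:E)%E.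
  apply: le_trans (ereal_inf_lbound _) _; first by exists V.
  by apply: ge_ereal_sup => _ [k Vk <-]; exact: HV.
pose G' : R := g%:R; pose c : R := (2 ^ g)%:R.
have G'0 : (0 <= G')%R by rewrite /G' ler0n.
pose eta : R := Num.min (1/4) (eps / (4 * (G' + 1))).
have eta0 : (0 < eta)%R.
  rewrite lt_min; apply/andP; split; first by [].
  by apply: divr_gt0 => //; apply: mulr_gt0 => //; apply: ltr_wpDl.
have etale : (eta <= 1/4)%R by rewrite ge_min lexx.
have etaeps : (eta * (4 * (G' + 1)) <= eps)%R.
  rewrite -ler_pdivlMr; first by rewrite ge_min lexx orbT.
  by apply: mulr_gt0 => //; apply: ltr_wpDl.
move/cvgrPdist_lt: hB => /(_ eta eta0) HBn.
have : \forall k \near \oo,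
    (P k [set w | S k w \subset goodset (mu k) m delta] <= eps%:E)%E.
  near=> k.
  have kN1 : (N1 <= k)%N by near: k; exact: nbhs_infty_ge.
  have km : (4 * m <= k)%N by near: k; exact: nbhs_infty_ge.
  have kc : (4 * c / eps <= k%:R)%R by near: k; exact: nbhs_infty_ger.
  have hb : (`|0 - (B k)%:R / k%:R| < eta)%R by near: k; exact: HBn.
  have k0 : (0 < k)%N by apply: leq_trans km; rewrite muln_gt0 m0.
  have kr0 : (0 < k%:R :> R)%R by rewrite ltr0n.
  have hb' : ((B k)%:R < eta * k%:R :> R)%R.
    move: hb; rewrite sub0r normrN ger0_norm ?divr_ge0 // ltr_pdivrMr //.
  have hm' : (4 * m%:R <= k%:R :> R)%R.
    by rewrite -(ler_nat R) natrM in km.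
  have hBm : (B k + m < k)%N.
    rewrite -(ltr_nat R) natrD.
    have : (eta * k%:R <= 1/4 * k%:R :> R)%R by apply: ler_wpM2r => //; exact: ltW.
    lra.
  have mk : (m <= k)%N by apply: leq_trans (ltnW hBm); exact: leq_addl.
  have h1 : forall t, (t < B k)%N -> forall i j : 'I_k,
     P k [set w | i \in unobserved (X k) t w /\ j \in unobserved (X k) t w /\ X k t w = i]
   = P k [set w | i \in unobserved (X k) t w /\ j \in unobserved (X k) t w /\ X k t w = j].
    move=> t tB i j; have := prop1 k t mk tB setT _ i j; rewrite !setTI; apply.
    by case: (sig k t) => F0 FC _; have := FC set0 F0; rewrite setD0.
  have h2 : forall S1 S2 : {set 'I_k}, #|S1| = m -> #|S2| = m ->
      P k [set w | S1 \subset unobserved (X k) (B k) w /\ S2 \subset unobserved (X k) (B k) w /\ S k w = S1]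
    = P k [set w | S1 \subset unobserved (X k) (B k) w /\ S2 \subset unobserved (X k) (B k) w /\ S k w = S2].
    move=> S1 S2 c1 c2; have := prop2 k mk setT _ S1 S2 c1 c2; rewrite !setTI; apply.
    by case: (sig k (B k)) => F0 FC _; have := FC set0 F0; rewrite setD0.
  have bd := @bound_k _ _ _ (P k) k (X k) (mX k) (S k) (mS k) m (B k) m0
     (fun w => cardS k w mk) h1 h2 (goodset (mu k) m delta) g (HN1 k kN1).
  have fP : P k [set w | S k w \subset goodset (mu k) m delta] \is a fin_num.
    by rewrite fin_num_measure //; exact: (@mSsub _ _ _ (S k) (mS k)).
  rewrite -(fineK fP) lee_fin; rewrite -(fineK fP) -EFinM lee_fin in bd.
  apply: (@real_fin _ k%:R (B k)%:R m%:R G' c _ eps eta) => //.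
  - by apply: fine_ge0; apply: measure_ge0.
  - exact: ltW.
  - by move: kc; rewrite ler_pdivrMr // [X in _ <= X -> _]mulrC.
  move: bd; rewrite -subnDA natrB; last exact: ltnW.
  by rewrite !natrD natrM /G' /c opprD addrA.
move=> H; by exists [set k | (P k [set w | S k w \subset goodset (mu k) m delta] <= eps%:E)%E].
Unshelve. all: by end_near.
Qed.
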